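(* With $P=K\overline{K}$ and $Q=L\overline{L}$, the following set of monomials is a basis of the vector space $U_{K,L,norm}$: $\{PK^iE^jF^k\}_{i,j,k\ge0}\cup\{\overline{K}^iE^jF^k\}_{i>0,\,j,k\ge0}\cup\{QL^iE^jF^k\}_{i,j,k\ge0}\cup\{\overline{L}^iE^jF^k\}_{i>0,\,j,k\ge0}$.
   Context: Fix $q\in\mathbb{C}$, $q\neq 0,\pm1$. $U_{K,L,norm}$ is the unital associative $\mathbb{C}$-algebra generated by $K,\overline{K},L,\overline{L},E,F$ subject to $K\overline{K}K=K$, $\overline{K}K\overline{K}=\overline{K}$, $K\overline{K}=\overline{K}K$, $L\overline{L}L=L$, $\overline{L}L\overline{L}=\overline{L}$, $L\overline{L}=\overline{L}L$, $K\overline{K}+L\overline{L}=\mathbf{1}$, $KE=q^2EK$, $LE=q^2EL$, $\overline{K}E=q^{-2}E\overline{K}$, $\overline{L}E=q^{-2}E\overline{L}$, $KF=q^{-2}FK$, $LF=q^{-2}FL$, $\overline{K}F=q^2F\overline{K}$, $\overline{L}F=q^2F\overline{L}$, $EF-FE=\frac{(K+L)-(\overline{K}+\overline{L})}{q-q^{-1}}$. Here $PK^0=P$, $QL^0=Q$. *)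

(* Defs.v *)
From HB Require Import structures.
From mathcomp Require Import all_boot all_order all_algebra.
Set Implicit Arguments. Unset Strict Implicit. Unset Printing Implicit Defensive.
Import Order.TTheory GRing.Theory Num.Theory.
Local Open Scope ring_scope.

Definition gen := 'I_6.
Definition gK  : gen := @Ordinal 6 0 isT.
Definition gKb : gen := @Ordinal 6 1 isT.
Definition gL  : gen := @Ordinal 6 2 isT.
Definition gLb : gen := @Ordinal 6 3 isT.
Definition gE  : gen := @Ordinal 6 4 isT.
Definition gF  : gen := @Ordinal 6 5 isT.

Definition word := seq gen.

(* Elements of the free algebra C<K,Kb,L,Lb,E,F> are given by their
   coefficient function on words (only finitely supported ones arise). *)
Section FreeAlg.
Variable R : fieldType.

Definition fel := word -> R.
Definition fzero : fel := fun _ => 0.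
Definition fadd (f g : fel) : fel := fun u => f u + g u.
Definition fopp (f : fel) : fel := fun u => - f u.
Definition fsub (f g : fel) : fel := fadd f (fopp g).
Definition fscale (c : R) (f : fel) : fel := fun u => c * f u.
Definition delta (w : word) : fel := fun u => if u == w then 1 else 0.
Definition lmulw (a : word) (f : fel) : fel :=
  fun u => if take (size a) u == a then f (drop (size a) u) else 0.
Definition rmulw (b : word) (f : fel) : fel :=
  fun u => if drop (size u - size b) u == b then f (take (size u - size b) u)
           else 0.
End FreeAlg.

Arguments fzero {R}.

Section Relations.
Variable R : fieldType.
Variable q : R.

Local Notation d := (@delta R).

Definition relators : seq (fel R) := [::
  fsub (d [:: gK; gKb; gK]) (d [:: gK]);
  fsub (d [:: gKb; gK; gKb]) (d [:: gKb]);
  fsub (d [:: gK; gKb]) (d [:: gKb; gK]);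
  fsub (d [:: gL; gLb; gL]) (d [:: gL]);
  fsub (d [:: gLb; gL; gLb]) (d [:: gLb]);
  fsub (d [:: gL; gLb]) (d [:: gLb; gL]);
  fsub (fadd (d [:: gK; gKb]) (d [:: gL; gLb])) (d [::]);
  fsub (d [:: gK; gE]) (fscale (q ^+ 2) (d [:: gE; gK]));
  fsub (d [:: gL; gE]) (fscale (q ^+ 2) (d [:: gE; gL]));
  fsub (d [:: gKb; gE]) (fscale (q ^- 2) (d [:: gE; gKb]));
  fsub (d [:: gLb; gE]) (fscale (q ^- 2) (d [:: gE; gLb]));
  fsub (d [:: gK; gF]) (fscale (q ^- 2) (d [:: gF; gK]));
  fsub (d [:: gL; gF]) (fscale (q ^- 2) (d [:: gF; gL]));
  fsub (d [:: gKb; gF]) (fscale (q ^+ 2) (d [:: gF; gKb]));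
  fsub (d [:: gLb; gF]) (fscale (q ^+ 2) (d [:: gF; gLb]));
  fsub (fsub (d [:: gE; gF]) (d [:: gF; gE]))
       (fscale (q - q^-1)^-1
          (fsub (fadd (d [:: gK]) (d [:: gL])) (fadd (d [:: gKb]) (d [:: gLb]))))
].

Inductive inI : fel R -> Prop :=
  | inI0 : inI fzero
  | inIadd f g : inI f -> inI g -> inI (fadd f g)
  | inIscale c f : inI f -> inI (fscale c f)
  | inIgen (n : nat) (a b : word) : (n < size relators)%N ->
      inI (lmulw a (rmulw b (nth fzero relators n))).
End Relations.

(* Indices of the proposed basis: (t, i, j, k) with
   t = 0 : P K^i E^j F^k        (i >= 0)
   t = 1 : Kbar^i E^j F^k       (i > 0)
   t = 2 : Q L^i E^j F^k        (i >= 0)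
   t = 3 : Lbar^i E^j F^k       (i > 0)    where P = K Kbar, Q = L Lbar. *)
Definition bidx := ('I_4 * nat * nat * nat)%type.

Definition admissible (b : bidx) : bool :=
  let: (t, i, _, _) := b in
  ((val t == 1%N) || (val t == 3%N)) ==> (0 < i)%N.

Definition bword (b : bidx) : word :=
  let: (t, i, j, k) := b in
  let pre :=
    match val t with
    | 0 => [:: gK; gKb] ++ nseq i gK
    | 1 => nseq i gKb
    | 2 => [:: gL; gLb] ++ nseq i gL
    | _ => nseq i gLb
    end in
  pre ++ nseq j gE ++ nseq k gF.

Definition lincomb (R : fieldType) (s : seq (bidx * R)) : fel R :=
  foldr (fun p acc => fadd (fscale p.2 (delta R (bword p.1))) acc) fzero s.

(* Main.v *)
Require Import Defs.
From HB Require Import structures.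
From mathcomp Require Import all_boot all_order all_algebra.
From Stdlib Require Import FunctionalExtensionality.
Set Implicit Arguments. Unset Strict Implicit. Unset Printing Implicit Defensive.
Import Order.TTheory GRing.Theory Num.Theory.
Local Open Scope ring_scope.
Set Warnings "-notation-overridden,-ambiguous-paths".

Section Basic.
Variable C : fieldType.
Variable q : C.
Local Notation d := (delta C).
Implicit Types f g h : fel C.

Definition felc (l : seq (word * C)) : fel C :=
  foldr (fun p acc => fadd (fscale p.2 (d p.1)) acc) fzero l.

Definition eqv f g := inI q (fsub f g).

Ltac fext := apply: functional_extensionality => ?.

Lemma eqv_refl f : eqv f f.
Proof.
rewrite /eqv (_ : fsub f f = fzero); first exact: inI0.
by fext; rewrite /fsub /fadd /fopp subrr.
Qed.

Lemma inI_eq f g : inI q f -> f = g -> inI q g.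
Proof. by move=> H <-. Qed.

Lemma eqv_sym f g : eqv f g -> eqv g f.
Proof.
move=> H; rewrite /eqv in H *; apply: (inI_eq (inIscale (-1)%R H)).
by fext; rewrite /fsub /fadd /fopp /fscale mulN1r opprD opprK addrC.
Qed.

Lemma eqv_trans g f h : eqv f g -> eqv g h -> eqv f h.
Proof.
move=> H1 H2; rewrite /eqv in H1 H2 *; apply: (inI_eq (inIadd H1 H2)).
by fext; rewrite /fsub /fadd /fopp addrA subrK.
Qed.

Lemma eqv_add f1 f2 g1 g2 : eqv f1 g1 -> eqv f2 g2 -> eqv (fadd f1 f2) (fadd g1 g2).
Proof.
move=> H1 H2; rewrite /eqv in H1 H2 *; apply: (inI_eq (inIadd H1 H2)).
by fext; rewrite /fsub /fadd /fopp opprD addrACA.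
Qed.

Lemma eqv_scale c f g : eqv f g -> eqv (fscale c f) (fscale c g).
Proof.
move=> H; rewrite /eqv in H *; apply: (inI_eq (inIscale c H)).
by fext; rewrite /fsub /fadd /fopp /fscale mulrDr mulrN.
Qed.

Lemma eqv_sub f1 f2 g1 g2 : eqv f1 g1 -> eqv f2 g2 -> eqv (fsub f1 f2) (fsub g1 g2).
Proof.
move=> H1 H2; apply: eqv_add => //.
apply: (inI_eq (inIscale (-1)%R H2)).
by fext; rewrite /fsub /fadd /fopp /fscale mulN1r opprD.
Qed.

Lemma eqv_eq f g : f = g -> eqv f g.
Proof. by move->; apply: eqv_refl. Qed.

Lemma lmulw_zero a : lmulw a (@fzero C) = fzero.
Proof. by fext; rewrite /lmulw /fzero; case: ifP. Qed.

Lemma lmulw_add a f g : lmulw a (fadd f g) = fadd (lmulw a f) (lmulw a g).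
Proof. by fext; rewrite /lmulw /fadd; case: ifP => // _; rewrite addr0. Qed.

Lemma lmulw_scale a c f : lmulw a (fscale c f) = fscale c (lmulw a f).
Proof. by fext; rewrite /lmulw /fscale; case: ifP => // _; rewrite mulr0. Qed.

Lemma lmulw_lmulw a b f : lmulw a (lmulw b f) = lmulw (a ++ b) f.
Proof.
apply: functional_extensionality => x; rewrite /lmulw size_cat drop_drop addnC.
 case: (eqVneq (take (size a) x) a) => Ha.
  have -> : take (size a + size b) x = a ++ take (size b) (drop (size a) x).
    by rewrite takeD Ha.
  by rewrite eqseq_cat // eqxx /=; case: ifP.
case: ifP => // /eqP Hx; exfalso; move/eqP: Ha; apply.
by rewrite -[in RHS](take_size_cat b (erefl (size a))) -Hx take_takel // leq_addr.
Qed.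

Lemma inI_lmulw a f : inI q f -> inI q (lmulw a f).
Proof.
elim=> [|f1 f2 _ H1 _ H2|c f1 _ H|n a' b Hn].
- rewrite lmulw_zero; exact: inI0.
- rewrite lmulw_add; exact: inIadd.
- rewrite lmulw_scale; exact: inIscale.
- rewrite lmulw_lmulw; exact: inIgen.
Qed.

Lemma eqv_lmulw a f g : eqv f g -> eqv (lmulw a f) (lmulw a g).
Proof.
move=> H; rewrite /eqv in H *; apply: (inI_eq (inI_lmulw a H)).
by fext; rewrite /lmulw /fsub /fadd /fopp; case: ifP => // _; rewrite oppr0 addr0.
Qed.

Lemma lmulw_delta a w : lmulw a (d w) = d (a ++ w).
Proof.
apply: functional_extensionality => x; rewrite /lmulw /delta.
case: (eqVneq (take (size a) x) a) => Ha.
  have Hx : x = a ++ drop (size a) x by rewrite -{1}(cat_take_drop (size a) x) Ha.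
  by rewrite [in RHS]Hx eqseq_cat // eqxx.
case: (eqVneq x (a ++ w)) => // Hx.
by rewrite Hx take_size_cat ?eqxx in Ha.
Qed.

Lemma rmulw_delta b w : rmulw b (d w) = d (w ++ b).
Proof.
apply: functional_extensionality => x; rewrite /rmulw /delta.
case: (eqVneq x (w ++ b)) => [->|Hx].
  by rewrite size_cat addnK drop_size_cat // take_size_cat // !eqxx.
case: ifP => // /eqP Hb; case: ifP => // /eqP Hw; exfalso; move/eqP: Hx; apply.
by rewrite -Hw -{2}Hb cat_take_drop.
Qed.

Lemma rmulw_add b f g : rmulw b (fadd f g) = fadd (rmulw b f) (rmulw b g).
Proof. by fext; rewrite /rmulw /fadd; case: ifP => // _; rewrite addr0. Qed.

Lemma rmulw_scale b c f : rmulw b (fscale c f) = fscale c (rmulw b f).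
Proof. by fext; rewrite /rmulw /fscale; case: ifP => // _; rewrite mulr0. Qed.

Lemma rmulw_zero b : rmulw b (@fzero C) = fzero.
Proof. by fext; rewrite /rmulw /fzero; case: ifP. Qed.

Lemma lmulw_opp a f : lmulw a (fopp f) = fopp (lmulw a f).
Proof. by fext; rewrite /lmulw /fopp; case: ifP => // _; rewrite oppr0. Qed.

Lemma rmulw_opp b f : rmulw b (fopp f) = fopp (rmulw b f).
Proof. by fext; rewrite /rmulw /fopp; case: ifP => // _; rewrite oppr0. Qed.

Lemma fsubE f g : fsub f g = fadd f (fscale (-1) g).
Proof. by fext; rewrite /fsub /fadd /fopp /fscale mulN1r. Qed.

Lemma ctx_felc a b l :
  lmulw a (rmulw b (felc l)) = felc (map (fun p => (a ++ p.1 ++ b, p.2)) l).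
Proof.
elim: l => [|[m c] l IH] /=; first by rewrite rmulw_zero lmulw_zero.
by rewrite rmulw_add lmulw_add rmulw_scale lmulw_scale rmulw_delta lmulw_delta IH catA.
Qed.

Lemma felc_cat l1 l2 : felc (l1 ++ l2) = fadd (felc l1) (felc l2).
Proof.
elim: l1 => [|p l IH] /=; first by fext; rewrite /fadd /fzero add0r.
by rewrite IH; fext; rewrite /fadd addrA.
Qed.

Lemma felc_scale c l : felc (map (fun p => (p.1, c * p.2)) l) = fscale c (felc l).
Proof.
elim: l => [|p l IH] /=; first by fext; rewrite /fscale /fzero mulr0.
by rewrite IH; fext; rewrite /fadd /fscale mulrDr mulrA.
Qed.

Lemma delta_felc m : d m = felc [:: (m, 1)].
Proof. by fext; rewrite /= /fadd /fscale /fzero mul1r addr0. Qed.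

Lemma lincomb_felc (s : seq (bidx * C)) :
  lincomb s = felc (map (fun p => (bword p.1, p.2)) s).
Proof. by elim: s => //= p s ->. Qed.


Definition spanned f := exists s : seq (bidx * C), all admissible (map fst s) /\ eqv f (lincomb s).
Definition Sp w := spanned (d w).

Lemma sp_eqv f g : eqv f g -> spanned g -> spanned f.
Proof. by move=> H [s [Ha Hs]]; exists s; split=> //; apply: eqv_trans Hs. Qed.

Lemma sp_zero : spanned fzero.
Proof. by exists [::]; split=> //; apply: eqv_refl. Qed.

Lemma sp_add f g : spanned f -> spanned g -> spanned (fadd f g).
Proof.
move=> [s1 [Ha1 H1]] [s2 [Ha2 H2]]; exists (s1 ++ s2); split.
  by rewrite map_cat all_cat Ha1 Ha2.
by rewrite !lincomb_felc map_cat felc_cat -!lincomb_felc; apply: eqv_add.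
Qed.

Lemma sp_scale c f : spanned f -> spanned (fscale c f).
Proof.
move=> [s [Ha H]]; exists (map (fun p => (p.1, c * p.2)) s); split.
  by rewrite -map_comp.
have -> : lincomb [seq (p.1, c * p.2) | p <- s] = fscale c (lincomb s).
  elim: (s) => [|p s' IH] /=; first by fext; rewrite /fscale /fzero mulr0.
  by rewrite IH; fext; rewrite /fadd /fscale mulrDr mulrA.
exact: eqv_scale.
Qed.

Lemma sp_sub f g : spanned f -> spanned g -> spanned (fsub f g).
Proof. by move=> H1 H2; rewrite fsubE; apply: sp_add => //; apply: sp_scale. Qed.

Lemma Sp_eqv w1 w2 : eqv (d w1) (d w2) -> Sp w2 -> Sp w1.
Proof. exact: sp_eqv. Qed.

Lemma Sp_zero w : eqv (d w) fzero -> Sp w.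
Proof. by move=> H; apply: sp_eqv H sp_zero. Qed.

Lemma eqv_cancel A B D : eqv (fadd A B) D -> eqv A D -> eqv B fzero.
Proof.
move=> H1 H2; rewrite /eqv in H1 H2 *; apply: (inI_eq (inIadd H1 (inIscale (-1)%R H2))).
fext; rewrite /fsub /fadd /fopp /fscale /fzero oppr0 addr0 mulN1r.
by rewrite opprB addrA subrK addrC addKr.
Qed.

Lemma eqv_addC A B D : eqv (fadd A B) D -> eqv (fadd B A) D.
Proof. by apply: eqv_trans; apply: eqv_eq; fext; rewrite /fadd addrC. Qed.

End Basic.

Section Rels.
Variable C : fieldType.
Variable q : C.
Local Notation d := (delta C).
Local Notation eqv := (eqv q).
Local Notation a := (q - q^-1)^-1.

Lemma rel0 u v : eqv (d (u ++ [:: gK; gKb; gK] ++ v)) (d (u ++ [:: gK] ++ v)).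
Proof. have := @inIgen C q 0 u v isT;
  rewrite /= /fsub !(rmulw_add, rmulw_opp, rmulw_scale, rmulw_delta,
   lmulw_add, lmulw_opp, lmulw_scale, lmulw_delta); move=> H; exact: H. Qed.
Lemma rel1 u v : eqv (d (u ++ [:: gKb; gK; gKb] ++ v)) (d (u ++ [:: gKb] ++ v)).
Proof. have := @inIgen C q 1 u v isT;
  rewrite /= /fsub !(rmulw_add, rmulw_opp, rmulw_scale, rmulw_delta,
   lmulw_add, lmulw_opp, lmulw_scale, lmulw_delta); move=> H; exact: H. Qed.
Lemma rel2 u v : eqv (d (u ++ [:: gK; gKb] ++ v)) (d (u ++ [:: gKb; gK] ++ v)).
Proof. have := @inIgen C q 2 u v isT;
  rewrite /= /fsub !(rmulw_add, rmulw_opp, rmulw_scale, rmulw_delta,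
   lmulw_add, lmulw_opp, lmulw_scale, lmulw_delta); move=> H; exact: H. Qed.
Lemma rel3 u v : eqv (d (u ++ [:: gL; gLb; gL] ++ v)) (d (u ++ [:: gL] ++ v)).
Proof. have := @inIgen C q 3 u v isT;
  rewrite /= /fsub !(rmulw_add, rmulw_opp, rmulw_scale, rmulw_delta,
   lmulw_add, lmulw_opp, lmulw_scale, lmulw_delta); move=> H; exact: H. Qed.
Lemma rel4 u v : eqv (d (u ++ [:: gLb; gL; gLb] ++ v)) (d (u ++ [:: gLb] ++ v)).
Proof. have := @inIgen C q 4 u v isT;
  rewrite /= /fsub !(rmulw_add, rmulw_opp, rmulw_scale, rmulw_delta,
   lmulw_add, lmulw_opp, lmulw_scale, lmulw_delta); move=> H; exact: H. Qed.
Lemma rel5 u v : eqv (d (u ++ [:: gL; gLb] ++ v)) (d (u ++ [:: gLb; gL] ++ v)).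
Proof. have := @inIgen C q 5 u v isT;
  rewrite /= /fsub !(rmulw_add, rmulw_opp, rmulw_scale, rmulw_delta,
   lmulw_add, lmulw_opp, lmulw_scale, lmulw_delta); move=> H; exact: H. Qed.
Lemma rel6 u v : eqv (fadd (d (u ++ [:: gK; gKb] ++ v)) (d (u ++ [:: gL; gLb] ++ v))) (d (u ++ v)).
Proof. have := @inIgen C q 6 u v isT;
  rewrite /= /fsub !(rmulw_add, rmulw_opp, rmulw_scale, rmulw_delta,
   lmulw_add, lmulw_opp, lmulw_scale, lmulw_delta); move=> H; exact: H. Qed.
Lemma rel7 u v : eqv (d (u ++ [:: gK; gE] ++ v)) (fscale (q ^+ 2) (d (u ++ [:: gE; gK] ++ v))).
Proof. have := @inIgen C q 7 u v isT;
  rewrite /= /fsub !(rmulw_add, rmulw_opp, rmulw_scale, rmulw_delta,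
   lmulw_add, lmulw_opp, lmulw_scale, lmulw_delta); move=> H; exact: H. Qed.
Lemma rel8 u v : eqv (d (u ++ [:: gL; gE] ++ v)) (fscale (q ^+ 2) (d (u ++ [:: gE; gL] ++ v))).
Proof. have := @inIgen C q 8 u v isT;
  rewrite /= /fsub !(rmulw_add, rmulw_opp, rmulw_scale, rmulw_delta,
   lmulw_add, lmulw_opp, lmulw_scale, lmulw_delta); move=> H; exact: H. Qed.
Lemma rel9 u v : eqv (d (u ++ [:: gKb; gE] ++ v)) (fscale (q ^- 2) (d (u ++ [:: gE; gKb] ++ v))).
Proof. have := @inIgen C q 9 u v isT;
  rewrite /= /fsub !(rmulw_add, rmulw_opp, rmulw_scale, rmulw_delta,
   lmulw_add, lmulw_opp, lmulw_scale, lmulw_delta); move=> H; exact: H. Qed.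
Lemma rel10 u v : eqv (d (u ++ [:: gLb; gE] ++ v)) (fscale (q ^- 2) (d (u ++ [:: gE; gLb] ++ v))).
Proof. have := @inIgen C q 10 u v isT;
  rewrite /= /fsub !(rmulw_add, rmulw_opp, rmulw_scale, rmulw_delta,
   lmulw_add, lmulw_opp, lmulw_scale, lmulw_delta); move=> H; exact: H. Qed.
Lemma rel11 u v : eqv (d (u ++ [:: gK; gF] ++ v)) (fscale (q ^- 2) (d (u ++ [:: gF; gK] ++ v))).
Proof. have := @inIgen C q 11 u v isT;
  rewrite /= /fsub !(rmulw_add, rmulw_opp, rmulw_scale, rmulw_delta,
   lmulw_add, lmulw_opp, lmulw_scale, lmulw_delta); move=> H; exact: H. Qed.
Lemma rel12 u v : eqv (d (u ++ [:: gL; gF] ++ v)) (fscale (q ^- 2) (d (u ++ [:: gF; gL] ++ v))).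
Proof. have := @inIgen C q 12 u v isT;
  rewrite /= /fsub !(rmulw_add, rmulw_opp, rmulw_scale, rmulw_delta,
   lmulw_add, lmulw_opp, lmulw_scale, lmulw_delta); move=> H; exact: H. Qed.
Lemma rel13 u v : eqv (d (u ++ [:: gKb; gF] ++ v)) (fscale (q ^+ 2) (d (u ++ [:: gF; gKb] ++ v))).
Proof. have := @inIgen C q 13 u v isT;
  rewrite /= /fsub !(rmulw_add, rmulw_opp, rmulw_scale, rmulw_delta,
   lmulw_add, lmulw_opp, lmulw_scale, lmulw_delta); move=> H; exact: H. Qed.
Lemma rel14 u v : eqv (d (u ++ [:: gLb; gF] ++ v)) (fscale (q ^+ 2) (d (u ++ [:: gF; gLb] ++ v))).
Proof. have := @inIgen C q 14 u v isT;
  rewrite /= /fsub !(rmulw_add, rmulw_opp, rmulw_scale, rmulw_delta,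
   lmulw_add, lmulw_opp, lmulw_scale, lmulw_delta); move=> H; exact: H. Qed.
Lemma rel15 u v : eqv (fsub (d (u ++ [:: gE; gF] ++ v)) (d (u ++ [:: gF; gE] ++ v)))
  (fscale a (fsub (fadd (d (u ++ [:: gK] ++ v)) (d (u ++ [:: gL] ++ v)))
                  (fadd (d (u ++ [:: gKb] ++ v)) (d (u ++ [:: gLb] ++ v))))).
Proof. have := @inIgen C q 15 u v isT;
  rewrite /= /fsub !(rmulw_add, rmulw_opp, rmulw_scale, rmulw_delta,
   lmulw_add, lmulw_opp, lmulw_scale, lmulw_delta); move=> H; exact: H. Qed.
End Rels.

Record ZH (C : fieldType) (q : C) (x xb y yb : gen) : Prop := ZHB {
 zh1 : forall u v, eqv q (delta C (u ++ [:: x; xb; x] ++ v)) (delta C (u ++ [:: x] ++ v));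
 zh2 : forall u v, eqv q (delta C (u ++ [:: xb; x; xb] ++ v)) (delta C (u ++ [:: xb] ++ v));
 zh3 : forall u v, eqv q (delta C (u ++ [:: x; xb] ++ v)) (delta C (u ++ [:: xb; x] ++ v));
 zh4 : forall u v, eqv q (delta C (u ++ [:: y; yb; y] ++ v)) (delta C (u ++ [:: y] ++ v));
 zh5 : forall u v, eqv q (delta C (u ++ [:: yb; y; yb] ++ v)) (delta C (u ++ [:: yb] ++ v));
 zh6 : forall u v, eqv q (delta C (u ++ [:: y; yb] ++ v)) (delta C (u ++ [:: yb; y] ++ v));
 zh7 : forall u v,
  eqv q (fadd (delta C (u ++ [:: x; xb] ++ v)) (delta C (u ++ [:: y; yb] ++ v))) (delta C (u ++ v)) }.

Lemma ZH_swap (C : fieldType) (q : C) x xb y yb : ZH q x xb y yb -> ZH q y yb x xb.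
Proof.
case=> h1 h2 h3 h4 h5 h6 h7; split=> // u v; exact: eqv_addC.
Qed.

Section Zero.
Variable C : fieldType.
Variable q : C.
Local Notation d := (delta C).
Local Notation eqv := (eqv q).
Variables x xb y yb : gen.
Hypothesis HZ : ZH q x xb y yb.
Let H1 := zh1 HZ. Let H2 := zh2 HZ. Let H3 := zh3 HZ. Let H4 := zh4 HZ.
Let H5 := zh5 HZ. Let H6 := zh6 HZ. Let H7 := zh7 HZ.

Lemma zA u v : eqv (d (u ++ [:: x; x; xb] ++ v)) (d (u ++ [:: x] ++ v)).
Proof.
apply: (eqv_trans _ (H1 u v)).
have h := H3 (u ++ [:: x]) v; rewrite -!catA in h; exact: h.
Qed.

Lemma zB u v : eqv (d (u ++ [:: x; y; yb] ++ v)) fzero.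
Proof.
have h := H7 (u ++ [:: x]) v; rewrite -!catA in h.
exact: (eqv_cancel h (zA u v)).
Qed.

Lemma zC u v : eqv (d (u ++ [:: x; y] ++ v)) fzero.
Proof.
have h1 := H4 (u ++ [:: x]) v; rewrite -!catA in h1.
exact: eqv_trans (eqv_sym h1) (zB u (y :: v)).
Qed.

Lemma zD u v : eqv (d (u ++ [:: x; yb] ++ v)) fzero.
Proof.
have h1 := H5 (u ++ [:: x]) v; rewrite -!catA in h1.
have h2 := H6 (u ++ [:: x]) (yb :: v); rewrite -!catA in h2.
exact: eqv_trans (eqv_sym h1) (eqv_trans (eqv_sym h2) (zB u (yb :: v))).
Qed.

Lemma zE u v : eqv (d (u ++ [:: xb; y] ++ v)) fzero.
Proof.
have h1 := H2 u (y :: v).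
have h2 := H3 (u ++ [:: xb]) (y :: v); rewrite -!catA in h2.
have h3 := zC (u ++ [:: xb; xb]) v; rewrite -!catA in h3.
exact: eqv_trans (eqv_sym h1) (eqv_trans h2 h3).
Qed.

Lemma zF u v : eqv (d (u ++ [:: xb; yb] ++ v)) fzero.
Proof.
have h1 := H2 u (yb :: v).
have h2 := H3 (u ++ [:: xb]) (yb :: v); rewrite -!catA in h2.
have h3 := zD (u ++ [:: xb; xb]) v; rewrite -!catA in h3.
exact: eqv_trans (eqv_sym h1) (eqv_trans h2 h3).
Qed.
End Zero.

Lemma nseq_rc (T : Type) n (z : T) l : nseq n z ++ z :: l = z :: nseq n z ++ l.
Proof. by elim: n => //= n ->. Qed.

Section Move.
Variable C : fieldType.
Variable q : C.
Local Notation d := (delta C).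
Local Notation eqv := (eqv q).
Local Notation Sp := (Sp q).

Lemma Sp_comm z e (c : C) : c != 0 ->
  (forall u v, eqv (d (u ++ [:: z; e] ++ v)) (fscale c (d (u ++ [:: e; z] ++ v)))) ->
  forall u v, Sp (u ++ z :: e :: v) -> Sp (u ++ e :: z :: v).
Proof.
move=> hc H u v hs; apply: (sp_eqv _ (sp_scale c^-1 hs)).
have h := eqv_scale c^-1 (H u v).
apply: eqv_sym; apply: (eqv_trans h); apply: eqv_eq.
by apply: functional_extensionality => w; rewrite /fscale mulrA mulVf // mul1r.
Qed.

Lemma moveL a t u v :
  (forall z, z \in t -> forall u v, Sp (u ++ z :: a :: v) -> Sp (u ++ a :: z :: v)) ->
  Sp (u ++ t ++ a :: v) -> Sp (u ++ a :: t ++ v).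
Proof.
elim: t u => [//|z t IH] u Hc hs.
have hs' : Sp ((u ++ [:: z]) ++ t ++ a :: v) by rewrite -catA.
have := IH (u ++ [:: z]) (fun z' hz => Hc z' ltac:(by rewrite inE hz orbT)) hs'.
rewrite -catA /= => h.
exact: (Hc z (mem_head _ _) u (t ++ v) h).
Qed.

Lemma moveR a t u v :
  (forall z, z \in t -> forall u v, Sp (u ++ a :: z :: v) -> Sp (u ++ z :: a :: v)) ->
  Sp (u ++ a :: t ++ v) -> Sp (u ++ t ++ a :: v).
Proof.
elim: t u => [//|z t IH] u Hc hs.
have h := Hc z (mem_head _ _) u (t ++ v) hs.
have h' : Sp ((u ++ [:: z]) ++ a :: t ++ v) by rewrite -catA.
have := IH (u ++ [:: z]) (fun z' hz => Hc z' ltac:(by rewrite inE hz orbT)) h'.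
by rewrite -catA.
Qed.
End Move.

Unset Implicit Arguments.
Section Span.
Variable C : fieldType.
Variable q : C.
Local Notation d := (delta C).
Local Notation eqv := (eqv q).
Local Notation Sp := (Sp q).
Variables x xb y yb : gen.
Hypothesis HZ : ZH q x xb y yb.
Let HZ' := ZH_swap HZ.
Hypothesis cE : forall z, z \in [:: x; xb; y; yb] ->
  forall u v, Sp (u ++ z :: gE :: v) -> Sp (u ++ gE :: z :: v).
Hypothesis cF : forall z, z \in [:: x; xb; y; yb] ->
  forall u v, Sp (u ++ z :: gF :: v) -> Sp (u ++ gF :: z :: v).
Hypothesis HEF : forall u v, Sp (u ++ gE :: gF :: v) -> Sp (u ++ x :: v) ->
  Sp (u ++ y :: v) -> Sp (u ++ xb :: v) -> Sp (u ++ yb :: v) ->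
  Sp (u ++ gF :: gE :: v).
Hypothesis B0 : forall i j k, Sp (x :: xb :: nseq i x ++ nseq j gE ++ nseq k gF).
Hypothesis B1 : forall i j k, (0 < i)%N -> Sp (nseq i xb ++ nseq j gE ++ nseq k gF).

Lemma FE_gen pre :
  (forall m k, Sp (pre ++ nseq m gE ++ nseq k gF)) ->
  (forall m k, Sp (pre ++ x :: nseq m gE ++ nseq k gF)) ->
  (forall m k, Sp (pre ++ xb :: nseq m gE ++ nseq k gF)) ->
  (forall m k, Sp (pre ++ y :: nseq m gE ++ nseq k gF)) ->
  (forall m k, Sp (pre ++ yb :: nseq m gE ++ nseq k gF)) ->
  forall j m k, Sp (pre ++ nseq m gE ++ gF :: nseq j gE ++ nseq k gF).
Proof.
move=> h1 hx hxb hy hyb; elim=> [|j IH] m k; first exact: h1 m k.+1.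
have mv : forall z, z \in [:: x; xb; y; yb] ->
    (forall m k, Sp (pre ++ z :: nseq m gE ++ nseq k gF)) ->
    Sp ((pre ++ nseq m gE) ++ z :: nseq j gE ++ nseq k gF).
  move=> z hz hzz; rewrite -catA; apply: moveR.
    by move=> e; rewrite mem_nseq => /andP[_ /eqP ->]; apply: cE.
  by rewrite catA -nseqD; apply: hzz.
rewrite catA; apply: HEF.
- by rewrite -catA nseq_rc; apply: (IH m.+1 k).
- by apply: mv => //; rewrite inE eqxx.
- by apply: mv => //; rewrite !inE eqxx !orbT.
- by apply: mv => //; rewrite !inE eqxx !orbT.
- by apply: mv => //; rewrite !inE eqxx !orbT.
Qed.

Lemma memx0 i z : z \in x :: xb :: nseq i x -> z \in [:: x; xb; y; yb].
Proof.
rewrite !inE mem_nseq => /orP[->//|/orP[->|/andP[_ ->]]]; by rewrite ?orbT.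
Qed.

Lemma memx1 i z : z \in nseq i xb -> z \in [:: x; xb; y; yb].
Proof. by rewrite mem_nseq !inE => /andP[_ ->]; rewrite orbT. Qed.

Lemma pre0_F i : forall j m k,
  Sp ((x :: xb :: nseq i x) ++ nseq m gE ++ gF :: nseq j gE ++ nseq k gF).
Proof.
apply: FE_gen.
- by move=> m k; apply: B0.
- by move=> m k; rewrite /= nseq_rc; apply: (B0 i.+1).
- move=> m k; case: i => [|[|i]].
  + exact: (Sp_eqv (eqv_trans (zh3 HZ [::] (xb :: (nseq m gE ++ nseq k gF))) (zh2 HZ [::] (nseq m gE ++ nseq k gF))) (B1 1 m k isT)).
  + exact: (Sp_eqv (zh1 HZ [::] (xb :: (nseq m gE ++ nseq k gF))) (B0 0 m k)).
  + rewrite /= -(nseq_rc i x) -(nseq_rc i x).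
    have := B0 i.+1 m k; rewrite /= -(nseq_rc i x) => hb.
    exact: (Sp_eqv (zA HZ (x :: xb :: nseq i x) (nseq m gE ++ nseq k gF)) hb).
- move=> m k; case: i => [|i].
  + exact: (Sp_zero (zE HZ [:: x] (nseq m gE ++ nseq k gF))).
  + rewrite /= -(nseq_rc i x).
    exact: (Sp_zero (zC HZ (x :: xb :: nseq i x) (nseq m gE ++ nseq k gF))).
- move=> m k; case: i => [|i].
  + exact: (Sp_zero (zF HZ [:: x] (nseq m gE ++ nseq k gF))).
  + rewrite /= -(nseq_rc i x).
    exact: (Sp_zero (zD HZ (x :: xb :: nseq i x) (nseq m gE ++ nseq k gF))).
Qed.

Lemma pre1_F i : (0 < i)%N -> forall j m k,
  Sp (nseq i xb ++ nseq m gE ++ gF :: nseq j gE ++ nseq k gF).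
Proof.
case: i => [//|i] _; apply: FE_gen.
- by move=> m k; apply: B1.
- move=> m k; case: i => [|i].
  + exact: (Sp_eqv (eqv_sym (zh3 HZ [::] (nseq m gE ++ nseq k gF))) (B0 0 m k)).
  + rewrite /= -(nseq_rc i xb) -(nseq_rc i xb).
    have h3 := zh3 HZ (nseq i xb ++ [:: xb]) (nseq m gE ++ nseq k gF).
    rewrite -!catA /= in h3.
    have h2 := zh2 HZ (nseq i xb) (nseq m gE ++ nseq k gF).
    have := B1 i.+1 m k isT; rewrite /= -(nseq_rc i xb) => hb.
    exact: (Sp_eqv (eqv_trans (eqv_sym h3) h2) hb).
- by move=> m k; rewrite nseq_rc; apply: (B1 i.+2).
- move=> m k; rewrite /= -(nseq_rc i xb).
  exact: (Sp_zero (zE HZ (nseq i xb) (nseq m gE ++ nseq k gF))).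
- move=> m k; rewrite /= -(nseq_rc i xb).
  exact: (Sp_zero (zF HZ (nseq i xb) (nseq m gE ++ nseq k gF))).
Qed.

Lemma span_gen g : g \in [:: x; xb; y; yb; gE; gF] ->
  (forall i j k, Sp (g :: x :: xb :: nseq i x ++ nseq j gE ++ nseq k gF)) /\
  (forall i j k, (0 < i)%N -> Sp (g :: nseq i xb ++ nseq j gE ++ nseq k gF)).
Proof.
rewrite !inE => /or4P[/eqP->|/eqP->|/eqP->|/or3P[/eqP->|/eqP->|/eqP->]]; split.
- by move=> i j k; exact: (Sp_eqv (zh3 HZ [:: x] _) (B0 i.+1 j k)).
- move=> [//|[|i]] j k _; first exact: (B0 0 j k).
  exact: (Sp_eqv (eqv_trans (zh3 HZ [::] _) (zh2 HZ [::] _)) (B1 i.+1 j k isT)).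
- move=> [|i] j k.
    exact: (Sp_eqv (zh2 HZ [::] _) (B1 1 j k isT)).
  exact: (Sp_eqv (eqv_trans (zh2 HZ [::] _) (eqv_sym (zh3 HZ [::] _))) (B0 i j k)).
- by move=> i j k _; apply: (B1 i.+1).
- by move=> i j k; exact: (Sp_zero (zC HZ' [::] _)).
- by move=> [//|i] j k _; exact: (Sp_zero (zD HZ' [::] _)).
- by move=> i j k; exact: (Sp_zero (zE HZ' [::] _)).
- by move=> [//|i] j k _; exact: (Sp_zero (zF HZ' [::] _)).
- move=> i j k; apply: (@moveL _ q gE (x :: xb :: nseq i x) [::]).
    by move=> z /memx0 hz; apply: cE.
  exact: (B0 i j.+1 k).
- move=> i j k hi; apply: (@moveL _ q gE (nseq i xb) [::]).
    by move=> z /memx1 hz; apply: cE.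
  exact: (B1 i j.+1 k hi).
- move=> i j k; apply: (@moveL _ q gF (x :: xb :: nseq i x) [::]).
    by move=> z /memx0 hz; apply: cF.
  exact: (pre0_F i j 0 k).
- move=> i j k hi; apply: (@moveL _ q gF (nseq i xb) [::]).
    by move=> z /memx1 hz; apply: cF.
  exact: (pre1_F i hi j 0 k).
Qed.
End Span.
Set Implicit Arguments.

Section SpanMain.
Variable C : fieldType.
Variable q : C.
Hypothesis hq : q != 0.
Local Notation d := (delta C).
Local Notation eqv := (eqv q).
Local Notation Sp := (Sp q).
Local Notation spanned := (spanned q).

Lemma ZH_K : ZH q gK gKb gL gLb.
Proof.
split=> u v; [exact: rel0|exact: rel1|exact: rel2|exact: rel3|exact: rel4
  |exact: rel5|exact: rel6].
Qed.

Lemma hq2 : q ^+ 2 != 0. Proof. exact: expf_neq0. Qed.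
Lemma hqm2 : q ^- 2 != 0. Proof. by rewrite invr_neq0 // hq2. Qed.

Lemma cE_all z : z \in [:: gK; gKb; gL; gLb] ->
  forall u v, Sp (u ++ z :: gE :: v) -> Sp (u ++ gE :: z :: v).
Proof.
rewrite !inE => /or4P[] /eqP ->.
- exact: (Sp_comm hq2 (@rel7 C q)).
- exact: (Sp_comm hqm2 (@rel9 C q)).
- exact: (Sp_comm hq2 (@rel8 C q)).
- exact: (Sp_comm hqm2 (@rel10 C q)).
Qed.

Lemma cF_all z : z \in [:: gK; gKb; gL; gLb] ->
  forall u v, Sp (u ++ z :: gF :: v) -> Sp (u ++ gF :: z :: v).
Proof.
rewrite !inE => /or4P[] /eqP ->.
- exact: (Sp_comm hqm2 (@rel11 C q)).
- exact: (Sp_comm hq2 (@rel13 C q)).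
- exact: (Sp_comm hqm2 (@rel12 C q)).
- exact: (Sp_comm hq2 (@rel14 C q)).
Qed.

Lemma HEF_all u v : Sp (u ++ gE :: gF :: v) -> Sp (u ++ gK :: v) ->
  Sp (u ++ gL :: v) -> Sp (u ++ gKb :: v) -> Sp (u ++ gLb :: v) ->
  Sp (u ++ gF :: gE :: v).
Proof.
move=> hEF hK hL hKb hLb.
apply: (sp_eqv _ (sp_sub hEF (sp_scale (q - q^-1)^-1 (sp_sub (sp_add hK hL) (sp_add hKb hLb))))).
have R := @rel15 C q u v; rewrite /eqv in R *.
apply: (inI_eq (inIscale (-1)%R R)).
apply: functional_extensionality => w; rewrite /fsub /fadd /fopp /fscale.
by rewrite mulN1r !opprB addrCA.
Qed.

Lemma Sp_basis b : admissible b -> Sp (bword b).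
Proof.
move=> hb; exists [:: (b, 1)]; split; first by rewrite /= hb.
by apply: eqv_eq; apply: functional_extensionality => w;
  rewrite /= /fadd /fscale /fzero mul1r addr0.
Qed.

Lemma mem_sw z : z \in [:: gL; gLb; gK; gKb] -> z \in [:: gK; gKb; gL; gLb].
Proof. by rewrite !inE => /or4P[]->; rewrite ?orbT. Qed.

Lemma Sp_cons g b : admissible b -> Sp (g :: bword b).
Proof.
case: b => [[[t i] j] k].
have hg1 : g \in [:: gK; gKb; gL; gLb; gE; gF].
  case: g => [[|[|[|[|[|[|g]]]]]] Hg] //; rewrite !inE;
  apply/orP; (try by left; apply/eqP; apply: val_inj);
  right; rewrite ?orbA; apply/orP; right; apply/eqP; apply: val_inj.
have hg2 : g \in [:: gL; gLb; gK; gKb; gE; gF].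
  move: hg1; rewrite !inE => /or3P[->|->|/or4P[]->]; by rewrite ?orbT.
have SK := span_gen C q gK gKb gL gLb ZH_K cE_all cF_all HEF_all
  (fun i j k => @Sp_basis (((@Ordinal 4 0 isT), i), j, k) isT)
  (fun i j k hi => @Sp_basis (((@Ordinal 4 1 isT), i), j, k) hi) g hg1.
have SL := span_gen C q gL gLb gK gKb (ZH_swap ZH_K)
  (fun z hz => cE_all (mem_sw hz)) (fun z hz => cF_all (mem_sw hz))
  (fun u v h1 h2 h3 h4 h5 => HEF_all h1 h3 h2 h5 h4)
  (fun i j k => @Sp_basis (((@Ordinal 4 2 isT), i), j, k) isT)
  (fun i j k hi => @Sp_basis (((@Ordinal 4 3 isT), i), j, k) hi) g hg2.
case: t => [[|[|[|[|t]]]] Ht] //= hb.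
- exact: SK.1.
- exact: SK.2.
- exact: SL.1.
- exact: SL.2.
Qed.

Lemma lmulw_felc a (l : seq (word * C)) : lmulw a (felc l) = felc (map (fun p => (a ++ p.1, p.2)) l).
Proof.
elim: l => [|p l IH] /=; first by rewrite lmulw_zero.
by rewrite lmulw_add lmulw_scale lmulw_delta IH.
Qed.

Lemma sp_felc (l : seq (word * C)) : (forall p, p \in l -> Sp p.1) -> spanned (felc l).
Proof.
elim: l => [|p l IH] H /=; first exact: sp_zero.
apply: sp_add; first by apply: sp_scale; apply: H; rewrite mem_head.
by apply: IH => p' hp; apply: H; rewrite inE hp orbT.
Qed.

Lemma Sp_all w : Sp w.
Proof.
elim: w => [|g w [s [Ha Hs]]].
  apply: (sp_eqv (eqv_sym (@rel6 C q [::] [::]))).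
  apply: sp_add.
    exact: (@Sp_basis (((@Ordinal 4 0 isT), 0%N), 0%N, 0%N) isT).
  exact: (@Sp_basis (((@Ordinal 4 2 isT), 0%N), 0%N, 0%N) isT).
have h := eqv_lmulw [:: g] Hs.
rewrite lmulw_delta lincomb_felc lmulw_felc -map_comp in h.
apply: (sp_eqv h); apply: sp_felc => p /mapP [[b c] hbc ->] /=.
apply: Sp_cons.
by move/allP: Ha; apply; apply/mapP; exists (b, c).
Qed.
End SpanMain.

From Stdlib Require Import Ring Field.
Section Ops.
Variable C : fieldType.
Variable q : C.
Hypothesis hq : q != 0.
Definition FT : Type := C.
Definition pl (x y : FT) : FT := x + y.
Definition ml (x y : FT) : FT := x * y.
Definition op (x : FT) : FT := - x.
Definition z0 : FT := 0.
Definition o1 : FT := 1.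
Definition sb (x y : FT) : FT := pl x (op y).
Definition iv (x : FT) : FT := x^-1.
Definition dv (x y : FT) : FT := ml x (iv y).
Lemma F_ring : @ring_theory FT z0 o1 pl ml sb op eq.
Proof.
split=> //; rewrite /pl /ml /z0 /o1 /sb /op.
- exact: add0r. - exact: addrC. - exact: addrA. - exact: mul1r. - exact: mulrC.
- exact: mulrA. - exact: mulrDl. - exact: subrr.
Qed.
Lemma F_field : @field_theory FT z0 o1 pl ml sb op dv iv eq.
Proof.
split=> //; first exact: F_ring.
- by rewrite /o1 /z0; apply/eqP; rewrite oner_eq0.
- by move=> p hp; rewrite /ml /iv mulVf //; apply/eqP.
Qed.
Add Field Ffield : F_field.
Lemma plE (x y : C) : x + y = pl x y. Proof. by []. Qed.
Lemma mlE (x y : C) : x * y = ml x y. Proof. by []. Qed.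
Lemma opE (x : C) : - x = op x. Proof. by []. Qed.
Lemma ivE (x : C) : x^-1 = iv x. Proof. by []. Qed.
Lemma z0E : (0 : C) = z0. Proof. by []. Qed.
Lemma o1E : (1 : C) = o1. Proof. by []. Qed.
Lemma eqF (x y : C) : @eq FT x y -> x = y. Proof. by []. Qed.
Lemma neqF (x : C) : x != 0 -> ~ (@eq FT x z0). Proof. by move/eqP. Qed.
Ltac fnorm := apply: eqF; rewrite ?ivE ?plE ?mlE ?opE ?z0E ?o1E.
Definition X := (bool * int * nat * nat)%type.
Definition V := X -> C.
Local Notation a := (q - q^-1)^-1.
Definition w (n : int) : C := (q ^+ 2) ^ n.
Fixpoint xs (j : nat) : C := if j is j'.+1 then 1 + q ^- 2 * xs j' else 0.
Fixpoint ys (j : nat) : C := if j is j'.+1 then 1 + q ^+ 2 * ys j' else 0.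

Definition vat (v : V) (s : bool) (n : int) (j k : nat) : C := v (s, n, j, k).
Arguments vat : simpl never.
Definition rK (v : V) : V := fun x => let: (s, n, j, k) := x in
  if s then vat v s (n - 1) j k else 0.
Definition rKb (v : V) : V := fun x => let: (s, n, j, k) := x in
  if s then vat v s (n + 1) j k else 0.
Definition rL (v : V) : V := fun x => let: (s, n, j, k) := x in
  if s then 0 else vat v s (n - 1) j k.
Definition rLb (v : V) : V := fun x => let: (s, n, j, k) := x in
  if s then 0 else vat v s (n + 1) j k.
Definition rE (v : V) : V := fun x => let: (s, n, j, k) := x in
  (0 < j)%:R * (w n)^-1 * vat v s n j.-1 k.
Definition rF (v : V) : V := fun x => let: (s, n, j, k) := x in
  (0 < k)%:R * w n * vat v s n j k.-1
  - a * w (n - 1) * xs j.+1 * vat v s (n - 1) j.+1 k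
  + a * w (n + 1) * ys j.+1 * vat v s (n + 1) j.+1 k.
Arguments rK : simpl never. Arguments rKb : simpl never. Arguments rL : simpl never.
Arguments rLb : simpl never. Arguments rE : simpl never. Arguments rF : simpl never.
Lemma atK v s n j k : vat (rK v) s n j k = if s then vat v s (n - 1) j k else 0.
Proof. by []. Qed.
Lemma atKb v s n j k : vat (rKb v) s n j k = if s then vat v s (n + 1) j k else 0.
Proof. by []. Qed.
Lemma atL v s n j k : vat (rL v) s n j k = if s then 0 else vat v s (n - 1) j k.
Proof. by []. Qed.
Lemma atLb v s n j k : vat (rLb v) s n j k = if s then 0 else vat v s (n + 1) j k.
Proof. by []. Qed.
Lemma atE v s n j k : vat (rE v) s n j k = (0 < j)%:R * (w n)^-1 * vat v s n j.-1 k.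
Proof. by []. Qed.
Lemma atF v s n j k : vat (rF v) s n j k =
  (0 < k)%:R * w n * vat v s n j k.-1
  - a * w (n - 1) * xs j.+1 * vat v s (n - 1) j.+1 k
  + a * w (n + 1) * ys j.+1 * vat v s (n + 1) j.+1 k.
Proof. by []. Qed.
Lemma at_ext (f g : V) : (forall s n j k, vat f s n j k = vat g s n j k) -> f = g.
Proof. by move=> H; apply: functional_extensionality => [[[[s n] j] k]]; apply: H. Qed.

Definition rho (g : gen) : V -> V :=
  match val g with 0 => rK | 1 => rKb | 2 => rL | 3 => rLb | 4 => rE | _ => rF end%N.
Definition rhow (u : word) (v : V) : V := foldr (fun g acc => rho g acc) v u.

Lemma w_neq0 n : w n != 0.
Proof. by rewrite /w expfz_neq0 // expf_neq0. Qed.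
Lemma wD1 n : w (n + 1) = q ^+ 2 * w n.
Proof. by rewrite /w expfzDr ?expf_neq0 // expr1z mulrC. Qed.
Lemma wB1 n : w (n - 1) = q ^- 2 * w n.
Proof.
have := wD1 (n - 1); rewrite subrK => ->.
by rewrite mulrA mulVf ?mul1r // expf_neq0.
Qed.
Lemma w0 : w 0 = 1. Proof. by rewrite /w expr0z. Qed.
Lemma q2_neq0 : q ^+ 2 != 0. Proof. exact: expf_neq0. Qed.
Lemma wiB1 n : (w (n - 1))^-1 = q ^+ 2 * (w n)^-1.
Proof. by rewrite wB1 invfM invrK mulrC. Qed.
Lemma wiD1 n : (w (n + 1))^-1 = q ^- 2 * (w n)^-1.
Proof. by rewrite wD1 invfM mulrC. Qed.

Ltac fx := apply: at_ext => s n j k.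
Ltac atE := rewrite ?(atK, atKb, atL, atLb, atE, atF).
Ltac fside := repeat split; apply: neqF; first [exact: w_neq0 | exact: q2_neq0].
Ltac fin := rewrite /= ?mulr1n ?mulr0n; move: ((q - q^-1)^-1) => A; fnorm; field; fside.

Lemma I0 v : rK (rKb (rK v)) = rK v.
Proof. by fx; atE; case: s => //; rewrite subrK. Qed.
Lemma I1 v : rKb (rK (rKb v)) = rKb v.
Proof. by fx; atE; case: s => //; rewrite addrK. Qed.
Lemma I2 v : rK (rKb v) = rKb (rK v).
Proof. by fx; atE; case: s => //; rewrite subrK addrK. Qed.
Lemma I3 v : rL (rLb (rL v)) = rL v.
Proof. by fx; atE; case: s => //; rewrite subrK. Qed.
Lemma I4 v : rLb (rL (rLb v)) = rLb v.
Proof. by fx; atE; case: s => //; rewrite addrK. Qed.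
Lemma I5 v : rL (rLb v) = rLb (rL v).
Proof. by fx; atE; case: s => //; rewrite subrK addrK. Qed.
Lemma I6 v : (fun y => rK (rKb v) y + rL (rLb v) y) = v.
Proof.
fx; rewrite /vat /=; rewrite -!/(vat _ _ _ _ _); atE.
by case: s; rewrite ?subrK ?addr0 ?add0r.
Qed.

Lemma I7 v : rK (rE v) = fun y => q ^+ 2 * rE (rK v) y.
Proof. fx; rewrite {2}/vat /= -/(vat _ _ _ _ _); atE; case: s; rewrite ?wB1; fin. Qed.
Lemma I8 v : rL (rE v) = fun y => q ^+ 2 * rE (rL v) y.
Proof. fx; rewrite {2}/vat /= -/(vat _ _ _ _ _); atE; case: s; rewrite ?wB1; fin. Qed.
Lemma I9 v : rKb (rE v) = fun y => q ^- 2 * rE (rKb v) y.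
Proof. fx; rewrite {2}/vat /= -/(vat _ _ _ _ _); atE; case: s; rewrite ?wD1; fin. Qed.
Lemma I10 v : rLb (rE v) = fun y => q ^- 2 * rE (rLb v) y.
Proof. fx; rewrite {2}/vat /= -/(vat _ _ _ _ _); atE; case: s; rewrite ?wD1; fin. Qed.
Lemma I11 v : rK (rF v) = fun y => q ^- 2 * rF (rK v) y.
Proof. fx; rewrite {2}/vat /= -/(vat _ _ _ _ _); atE; case: s; rewrite ?subrK ?addrK ?wB1 ?wD1; fin. Qed.
Lemma I12 v : rL (rF v) = fun y => q ^- 2 * rF (rL v) y.
Proof. fx; rewrite {2}/vat /= -/(vat _ _ _ _ _); atE; case: s; rewrite ?subrK ?addrK ?wB1 ?wD1; fin. Qed.
Lemma I13 v : rKb (rF v) = fun y => q ^+ 2 * rF (rKb v) y.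
Proof. fx; rewrite {2}/vat /= -/(vat _ _ _ _ _); atE; case: s; rewrite ?subrK ?addrK ?wB1 ?wD1; fin. Qed.
Lemma I14 v : rLb (rF v) = fun y => q ^+ 2 * rF (rLb v) y.
Proof. fx; rewrite {2}/vat /= -/(vat _ _ _ _ _); atE; case: s; rewrite ?subrK ?addrK ?wB1 ?wD1; fin. Qed.
Lemma I15 v : (fun y => rE (rF v) y - rF (rE v) y) =
  fun y => (q - q^-1)^-1 * ((rK v y + rL v y) - (rKb v y + rLb v y)).
Proof.
fx; rewrite /vat /=.
rewrite -[rE (rF v) _]/(vat (rE (rF v)) s n j k) -[rF (rE v) _]/(vat (rF (rE v)) s n j k).
rewrite -[rK v _]/(vat (rK v) s n j k) -[rL v _]/(vat (rL v) s n j k).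
rewrite -[rKb v _]/(vat (rKb v) s n j k) -[rLb v _]/(vat (rLb v) s n j k).
atE; case: j => [|j] /=; rewrite ?wB1 ?wD1; case: s; fin.
Qed.

Lemma rho_lin g (l : seq (C * V)) :
  rho g (fun y => \sum_(p <- l) p.1 * p.2 y) = fun x => \sum_(p <- l) p.1 * rho g p.2 x.
Proof.
apply: functional_extensionality => [[[[s n] j] k]].
rewrite /rho; case: g => [[|[|[|[|[|[|g]]]]]] Hg] //=;
  rewrite /rK /rKb /rL /rLb /rE /rF /vat /=.
- by case: s => //; rewrite big1 // => p _; rewrite mulr0.
- by case: s => //; rewrite big1 // => p _; rewrite mulr0.
- by case: s => //; rewrite big1 // => p _; rewrite mulr0.
- by case: s => //; rewrite big1 // => p _; rewrite mulr0.
- by rewrite mulr_sumr; apply: eq_bigr => p _; rewrite mulrCA.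
- rewrite !mulr_sumr -sumrB -big_split /=; apply: eq_bigr => p _.
  by fnorm; ring.
Qed.

Lemma rhoK : rho gK = rK. Proof. by []. Qed.
Lemma rhoKb : rho gKb = rKb. Proof. by []. Qed.
Lemma rhoL : rho gL = rL. Proof. by []. Qed.
Lemma rhoLb : rho gLb = rLb. Proof. by []. Qed.
Lemma rhoE : rho gE = rE. Proof. by []. Qed.
Lemma rhoF : rho gF = rF. Proof. by []. Qed.
Ltac relcase := eexists; split;
  [ rewrite /= ?fsubE ?delta_felc; repeat (rewrite -felc_scale || rewrite -felc_cat); reflexivity
  | move=> v y; rewrite /= !big_cons big_nil /= ?rhoK ?rhoKb ?rhoL ?rhoLb ?rhoE ?rhoF ].

Lemma relator_felc n : (n < 16)%N -> exists l : seq (word * C),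
  nth fzero (relators q) n = felc l /\
  forall v y, \sum_(p <- l) p.2 * rhow p.1 v y = 0.
Proof.
case: n => [|n] hn; first by relcase; rewrite I0; fnorm; ring.
case: n hn => [|n] hn; first by relcase; rewrite I1; fnorm; ring.
case: n hn => [|n] hn; first by relcase; rewrite I2; fnorm; ring.
case: n hn => [|n] hn; first by relcase; rewrite I3; fnorm; ring.
case: n hn => [|n] hn; first by relcase; rewrite I4; fnorm; ring.
case: n hn => [|n] hn; first by relcase; rewrite I5; fnorm; ring.
case: n hn => [|n] hn.
  relcase; have h := congr1 (fun f => f y) (I6 v); rewrite /= in h.
  by rewrite -h; fnorm; ring.
case: n hn => [|n] hn; first by relcase; rewrite I7 /=; fnorm; ring.
case: n hn => [|n] hn; first by relcase; rewrite I8 /=; fnorm; ring.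
case: n hn => [|n] hn; first by relcase; rewrite I9 /=; fnorm; ring.
case: n hn => [|n] hn; first by relcase; rewrite I10 /=; fnorm; ring.
case: n hn => [|n] hn; first by relcase; rewrite I11 /=; fnorm; ring.
case: n hn => [|n] hn; first by relcase; rewrite I12 /=; fnorm; ring.
case: n hn => [|n] hn; first by relcase; rewrite I13 /=; fnorm; ring.
case: n hn => [|n] hn; first by relcase; rewrite I14 /=; fnorm; ring.
case: n hn => [|n] hn.
  relcase; have h := congr1 (fun f => f y) (I15 v); rewrite /= in h.
  move/eqP: h; rewrite subr_eq => /eqP ->.
  by move: ((q - q^-1)^-1) => A; fnorm; ring.
by [].
Qed.
End Ops.

Section Indep.
Variable C : fieldType.
Variable q : C.
Hypothesis hq : q != 0.
Local Notation d := (delta C).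
Local Notation rhow := (rhow q).
Local Notation V := (V C).

Lemma rhow_cat u1 u2 v : rhow (u1 ++ u2) v = rhow u1 (rhow u2 v).
Proof. by rewrite /rhow foldr_cat. Qed.

Lemma rhow_lin u (l : seq (C * V)) :
  rhow u (fun y => \sum_(p <- l) p.1 * p.2 y) = fun x => \sum_(p <- l) p.1 * rhow u p.2 x.
Proof.
elim: u => [//|g u IH] /=.
rewrite -/(rhow u _) IH.
have -> : (fun x => \sum_(p <- l) p.1 * rhow u p.2 x) =
    (fun y => \sum_(p <- map (fun p => (p.1, rhow u p.2)) l) p.1 * p.2 y).
  by apply: functional_extensionality => y; rewrite big_map.
rewrite rho_lin; apply: functional_extensionality => x; rewrite big_map.
by apply: eq_bigr.
Qed.

Lemma rhow_zero u : rhow u (fun _ => 0) = fun _ => 0.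
Proof.
have h := rhow_lin u [::].
have e : (fun y : X => \sum_(p <- [::]) p.1 * p.2 y) = fun _ => (0 : C).
  by apply: functional_extensionality => y; rewrite big_nil.
rewrite e in h; rewrite h; apply: functional_extensionality => y; exact: big_nil.
Qed.

Definition e0 (j k : nat) : V := fun x => let: (s, n, j', k') := x in
  ((n == 0) && (j' == j) && (k' == k))%:R.
Definition v0 : V := e0 0 0.
Definition R u x := rhow u v0 x.

Definition ZZ (f : fel C) :=
  (exists ws : seq word, forall u, f u != 0 -> u \in ws) /\
  (forall ws, uniq ws -> (forall u, f u != 0 -> u \in ws) ->
     forall x, \sum_(u <- ws) f u * R u x = 0).

Lemma sum_cover (h : word -> C) ws W : uniq ws -> uniq W -> {subset ws <= W} ->
  (forall u, h u != 0 -> u \in ws) -> \sum_(u <- W) h u = \sum_(u <- ws) h u.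
Proof.
move=> hws hW sub cov.
have P : perm_eq W (ws ++ [seq u <- W | u \notin ws]).
  apply: uniq_perm => //.
    rewrite cat_uniq hws filter_uniq // andbT.
    by apply/hasPn => u; rewrite mem_filter => /andP[hu _].
  move=> u; rewrite mem_cat mem_filter; case: (boolP (u \in ws)) => hu /=.
    by rewrite (sub _ hu).
  by [].
rewrite (perm_big _ P) big_cat /= [X in _ + X]big1_seq ?addr0 // => u /andP[_].
rewrite mem_filter => /andP[hu _]; apply/eqP; exact: (contraNT (cov u) hu).
Qed.

Lemma sum_indep (h : word -> C) ws1 ws2 : uniq ws1 -> uniq ws2 ->
  (forall u, h u != 0 -> u \in ws1) -> (forall u, h u != 0 -> u \in ws2) ->
  \sum_(u <- ws1) h u = \sum_(u <- ws2) h u.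
Proof.
move=> h1 h2 c1 c2.
rewrite -(@sum_cover h ws1 (undup (ws1 ++ ws2))) ?undup_uniq //; last first.
  by move=> u hu; rewrite mem_undup mem_cat hu.
rewrite -(@sum_cover h ws2 (undup (ws1 ++ ws2))) ?undup_uniq //.
by move=> u hu; rewrite mem_undup mem_cat hu orbT.
Qed.

Lemma felc_supp (l : seq (word * C)) u : felc l u != 0 -> u \in map fst l.
Proof.
elim: l => [|[m c] l IH] /=; first by rewrite /fzero eqxx.
rewrite /fadd /fscale /delta inE; case: (eqVneq u m) => //= _.
by rewrite mulr0 add0r.
Qed.

Lemma felc_sum (l : seq (word * C)) W (F : word -> C) : uniq W -> {subset map fst l <= W} ->
  \sum_(u <- W) felc l u * F u = \sum_(p <- l) p.2 * F p.1.
Proof.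
elim: l => [|[m c] l IH] hW hsub /=.
  by rewrite big_nil big1 // => u _; rewrite /fzero mul0r.
rewrite big_cons /= -IH //; last by move=> u hu; apply: hsub; rewrite inE hu orbT.
rewrite /fadd /fscale.
under eq_bigr do rewrite mulrDl.
rewrite big_split /=; congr (_ + _).
rewrite (bigD1_seq m) //=; last by apply: hsub; rewrite mem_head.
rewrite /delta eqxx mulr1 big1 ?addr0 // => u hu.
by rewrite (negbTE hu) mulr0 mul0r.
Qed.

Lemma mul_neq0_l (x y : C) : x * y != 0 -> x != 0.
Proof. by apply: contraNneq => ->; rewrite mul0r. Qed.

Lemma ZZ_felc (l : seq (word * C)) :
  (forall x, \sum_(p <- l) p.2 * R p.1 x = 0) -> ZZ (felc l).
Proof.
move=> H; split; first by exists (map fst l); exact: felc_supp.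
move=> ws hws cov x.
rewrite (@sum_indep (fun u => felc l u * R u x) ws (undup (ws ++ map fst l))) ?undup_uniq //.
- rewrite felc_sum ?undup_uniq // => u hu.
  by rewrite mem_undup mem_cat hu orbT.
- by move=> u /mul_neq0_l; apply: cov.
- by move=> u /mul_neq0_l /felc_supp hu; rewrite mem_undup mem_cat hu orbT.
Qed.

Lemma ZZ_inI f : inI q f -> ZZ f.
Proof.
elim=> [|f1 f2 _ [[w1 c1] H1] _ [[w2 c2] H2]|c f1 _ [[w1 c1] H1]|n a b hn].
- split; first by exists [::] => u; rewrite /fzero eqxx.
  by move=> ws _ _ x; rewrite big1 // => u _; rewrite /fzero mul0r.
- have cov : forall u, fadd f1 f2 u != 0 -> u \in w1 ++ w2.
    move=> u; rewrite /fadd mem_cat; case: (eqVneq (f1 u) 0) => h0.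
      by rewrite h0 add0r => /c2 ->; rewrite orbT.
    by rewrite (c1 _ h0).
  split; first by exists (w1 ++ w2).
  move=> ws hws hcov x.
  set W := undup (ws ++ w1 ++ w2).
  rewrite (@sum_indep (fun u => fadd f1 f2 u * R u x) ws W) ?undup_uniq //.
  + rewrite /fadd; under eq_bigr do rewrite mulrDl.
    rewrite big_split /= H1 ?H2 ?addr0 ?undup_uniq // => u hu;
      first [by rewrite mem_undup !mem_cat (c1 _ hu) !orbT
            |by rewrite mem_undup !mem_cat (c2 _ hu) !orbT].
  + by move=> u /mul_neq0_l; apply: hcov.
  + by move=> u /mul_neq0_l /cov; rewrite mem_undup mem_cat => ->; rewrite orbT.
- have cov : forall u, fscale c f1 u != 0 -> u \in w1.
    by move=> u; rewrite /fscale mulrC => /mul_neq0_l; apply: c1.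
  split; first by exists w1.
  move=> ws hws hcov x.
  set W := undup (ws ++ w1).
  rewrite (@sum_indep (fun u => fscale c f1 u * R u x) ws W) ?undup_uniq //.
  + rewrite /fscale; under eq_bigr do rewrite -mulrA.
    rewrite -mulr_sumr H1 ?mulr0 ?undup_uniq // => u hu.
    by rewrite mem_undup mem_cat (c1 _ hu) orbT.
  + by move=> u /mul_neq0_l; apply: hcov.
  + by move=> u /mul_neq0_l /cov hu; rewrite mem_undup mem_cat hu orbT.
- have [l [hl hs]] := relator_felc hq hn.
  rewrite hl ctx_felc; apply: ZZ_felc => x; rewrite big_map /=.
  set V0 := rhow b v0.
  transitivity (rhow a (fun y => \sum_(p <- map (fun p => (p.2, rhow p.1 V0)) l) p.1 * p.2 y) x).
    rewrite rhow_lin big_map; apply: eq_bigr => p _.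
    by rewrite /R !rhow_cat.
  have -> : (fun y => \sum_(p <- map (fun p => (p.2, rhow p.1 V0)) l) p.1 * p.2 y) = fun _ => 0.
    by apply: functional_extensionality => y; rewrite big_map; exact: hs.
  by rewrite rhow_zero.
Qed.
End Indep.

Section Eval.
Variable C : fieldType.
Variable q : C.
Hypothesis hq : q != 0.
Local Notation rhow := (rhow q).
Local Notation V := (V C).
Local Notation e0 := (@e0 C).

Lemma rF_e0 k : rF q (e0 0 k) = e0 0 k.+1.
Proof.
apply: functional_extensionality => [[[[s n] j] k']].
rewrite /rF /vat /e0 /= !andbF !mulr0 subr0 addr0.
case: k' => [|k'] /=; first by rewrite !mul0r (_ : (0 == k.+1)%N = false) // andbF /= ?mulr0n.
rewrite eqSS mulr1n mul1r; case: (eqVneq n 0) => [->|hn] /=.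
  by rewrite w0 mul1r.
by rewrite mulr0.
Qed.

Lemma rE_e0 j k : rE q (e0 j k) = e0 j.+1 k.
Proof.
apply: functional_extensionality => [[[[s n] j'] k']].
rewrite /rE /vat /e0 /=.
case: j' => [|j'] /=; first by rewrite !mul0r (_ : (0 == j.+1)%N = false) // andbF /= ?mulr0n.
rewrite eqSS mulr1n mul1r; case: (eqVneq n 0) => [->|hn] /=.
  by rewrite w0 invr1 mul1r.
by rewrite mulr0.
Qed.

Lemma rhow_EF j k : rhow (nseq j gE ++ nseq k gF) (v0 C) = e0 j k.
Proof.
rewrite rhow_cat.
have -> : rhow (nseq k gF) (v0 C) = e0 0 k.
  by elim: k => [//|k IH] /=; rewrite -/(rhow _ _) IH rhoF rF_e0.
by elim: j => [//|j IH] /=; rewrite -/(rhow _ _) IH rhoE rE_e0.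
Qed.

Lemma iterK i (v : V) s n j k : rhow (nseq i gK) v (s, n, j, k) =
  if s then v (s, n - i%:Z, j, k) else (i == 0)%:R * v (s, n, j, k).
Proof.
elim: i n => [|i IH] n /=; first by case: s; rewrite ?subr0 ?mul1r.
rewrite -/(rhow _ _) rhoK /rK /vat IH {IH}; case: s => //=; last by rewrite mul0r.
by rewrite -addrA -opprD -intS.
Qed.
Lemma iterKb i (v : V) s n j k : rhow (nseq i gKb) v (s, n, j, k) =
  if s then v (s, n + i%:Z, j, k) else (i == 0)%:R * v (s, n, j, k).
Proof.
elim: i n => [|i IH] n /=; first by case: s; rewrite ?addr0 ?mul1r.
rewrite -/(rhow _ _) rhoKb /rKb /vat IH {IH}; case: s => //=; last by rewrite mul0r.
by rewrite -addrA -intS.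
Qed.
Lemma iterL i (v : V) s n j k : rhow (nseq i gL) v (s, n, j, k) =
  if s then (i == 0)%:R * v (s, n, j, k) else v (s, n - i%:Z, j, k).
Proof.
elim: i n => [|i IH] n /=; first by case: s; rewrite ?subr0 ?mul1r.
rewrite -/(rhow _ _) rhoL /rL /vat IH {IH}; case: s => //=; first by rewrite mul0r.
by rewrite -addrA -opprD -intS.
Qed.
Lemma iterLb i (v : V) s n j k : rhow (nseq i gLb) v (s, n, j, k) =
  if s then (i == 0)%:R * v (s, n, j, k) else v (s, n + i%:Z, j, k).
Proof.
elim: i n => [|i IH] n /=; first by case: s; rewrite ?addr0 ?mul1r.
rewrite -/(rhow _ _) rhoLb /rLb /vat IH {IH}; case: s => //=; first by rewrite mul0r.
by rewrite -addrA -intS.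
Qed.

Definition phi (b : bidx) : X := let: (t, i, j, k) := b in
  match val t with
  | 0 => (true, i%:Z, j, k)
  | 1 => (true, - i%:Z, j, k)
  | 2 => (false, i%:Z, j, k)
  | _ => (false, - i%:Z, j, k)
  end%N.

Lemma R_bword b y : admissible b -> R q (bword b) y = (y == phi b)%:R.
Proof.
case: b => [[[t i] j] k]; case: y => [[[s n] j'] k'].
case: t => [[|[|[|[|t]]]] Ht] //= hi; rewrite /R /= -!/(rhow _ _) rhow_cat.
- rewrite rhow_EF rhoK rhoKb /rK /rKb /vat iterK /e0 !xpair_eqE.
  case: s => /=; last by rewrite mulr0n.
  by rewrite subrK subr_eq0.
- rewrite rhow_EF iterKb /e0 !xpair_eqE.
  case: s => /=; first by rewrite addr_eq0.
  by case: i hi => // i _ /=; rewrite mul0r.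
- rewrite rhow_EF rhoL rhoLb /rL /rLb /vat iterL /e0 !xpair_eqE.
  case: s => /=; first by rewrite mulr0n.
  by rewrite subrK subr_eq0.
- rewrite rhow_EF iterLb /e0 !xpair_eqE.
  case: s => /=; last by rewrite addr_eq0.
  by case: i hi => // i _ /=; rewrite mul0r.
Qed.
End Eval.

Lemma phi_inj (b1 b2 : bidx) : admissible b1 -> admissible b2 -> phi b1 = phi b2 -> b1 = b2.
Proof.
case: b1 => [[[t1 i1] j1] k1]; case: b2 => [[[t2 i2] j2] k2].
have neg : forall a b : nat, (0 < b)%N -> a%:Z <> - b%:Z.
  move=> a b hb /eqP; rewrite -addr_eq0 -PoszD => /eqP [] /eqP.
  by rewrite addn_eq0 => /andP[_ /eqP hb0]; rewrite hb0 in hb.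
case: t1 => [[|[|[|[|t1]]]] H1] //; case: t2 => [[|[|[|[|t2]]]] H2] //= h1 h2;
  case=> e1 e2 e3; subst;
  try (by exfalso; apply: (neg _ _ h2 e1));
  try (by exfalso; apply: (neg _ _ h1 (esym e1)));
  try (have e1' := oppr_inj e1);
  try (case: e1' => ->);
  try (case: e1 => ->);
  by congr (_, _, _, _); apply: val_inj.
Qed.

Lemma uniq_coef (C : fieldType) (s : seq (bidx * C)) b c :
  uniq (map fst s) -> (b, c) \in s -> \sum_(p <- s) p.2 * (b == p.1)%:R = c.
Proof.
elim: s => [//|[b' c'] s IH] /= /andP[hb' hu] hin.
rewrite big_cons /=; rewrite inE in hin; case/orP: hin => [/eqP [eb ec]|hin]; first subst.
  rewrite eqxx mulr1 big1_seq ?addr0 // => p /andP[_ hp].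
  have := map_f fst hp; case: eqP => [<- hin|_ _]; last by rewrite mulr0.
  by rewrite hin in hb'.
have hb : b \in map fst s by apply: (map_f fst hin).
have -> : (b == b') = false by apply/eqP => e; rewrite -e hb in hb'.
by rewrite mulr0 add0r IH.
Qed.

Unset Implicit Arguments.
Theorem proposition6 (C : numClosedFieldType) (q : C)
  (hq0 : q != 0) (hq1 : q != 1) (hqm1 : q != -1) :
  (* spanning: every monomial of the free algebra is, modulo the ideal,
     a finite linear combination of the proposed basis monomials *)
  (forall w : word, exists s : seq (bidx * C),
      all admissible (map fst s) /\ inI q (fsub (delta C w) (lincomb s))) /\
  (* linear independence modulo the ideal *)
  (forall s : seq (bidx * C),
      all admissible (map fst s) -> uniq (map fst s) ->
      inI q (lincomb s) -> all (fun p => p.2 == 0) s).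
Proof.
split.
  by move=> w; have := Sp_all hq0 w.
move=> s Ha Hu HI.
have [_ Hz] := ZZ_inI hq0 HI.
rewrite lincomb_felc in Hz.
set W := undup (map fst (map (fun p => (bword p.1, p.2)) s)).
have cov : forall u, felc [seq (bword p.1, p.2) | p <- s] u != 0 -> u \in W.
  by move=> u /felc_supp hu; rewrite mem_undup.
apply/allP => [[b c]] hbc /=.
have := Hz W (undup_uniq _) cov (phi b).
rewrite felc_sum ?undup_uniq //; last by move=> u hu; rewrite mem_undup.
rewrite big_map /=.
have hab : forall p, p \in s -> admissible p.1.
  by move=> p hp; move/allP: Ha; apply; apply: map_f.
rewrite (eq_big_seq (fun p => p.2 * (b == p.1)%:R)); last first.
  move=> p hp /=; rewrite R_bword ?hab //.
  case: (eqVneq b p.1) => [<-|hne]; first by rewrite eqxx.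
  case: (eqVneq (phi b) (phi p.1)) => // e.
  by have := phi_inj (hab _ hbc) (hab _ hp) e; move: hne => /eqP.
by rewrite (uniq_coef Hu hbc) => ->.
Qed.
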